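(* In $\mathbb{Z}[q,q^{-1}][[x,y]]$, \[ \sum_{i=1}^{\infty}q^i[i]!\,x^iy^i\prod_{j=0}^{i}\frac{1}{q^j-q^j[j+1]x+[j]xy}=\frac{-y}{q(1-x)}+\sum_{i\ge1}\frac{q^{-i^2-i-1}y^i(q^{2i+1}-y)}{q^i-q^i[i+1]x+[i]xy}. \]
   Context: $[m]=1+q+\dots+q^{m-1}$ for $m\ge0$ ($[0]=0$), $[i]!=\prod_{m=1}^i[m]$. Each fraction denotes the inverse of its denominator in $\mathbb{Z}[q,q^{-1}][[x,y]]$ (the denominators have invertible constant term $q^j$). *)

(* Defs.v *)
(* Formal power series in two variables x, y over a
   commutative ring R, represented by their coefficient functions:
   f a b = coefficient of x^a y^b. *)
From HB Require Import structures.
From mathcomp Require Import all_boot all_order all_algebra.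
Set Implicit Arguments. Unset Strict Implicit. Unset Printing Implicit Defensive.
Import Order.TTheory GRing.Theory Num.Theory.
Local Open Scope ring_scope.

Definition ps (R : Type) := nat -> nat -> R.

Section PS.
Variable R : comUnitRingType.

Definition psC (c : R) : ps R := fun a b => if (a == 0)%N && (b == 0)%N then c else 0.
Definition psX : ps R := fun a b => if (a == 1)%N && (b == 0)%N then 1 else 0.
Definition psY : ps R := fun a b => if (a == 0)%N && (b == 1)%N then 1 else 0.

Definition psadd (f g : ps R) : ps R := fun a b => f a b + g a b.
Definition psopp (f : ps R) : ps R := fun a b => - f a b.
Definition psscale (c : R) (f : ps R) : ps R := fun a b => c * f a b.
Definition psmul (f g : ps R) : ps R := fun a b =>
  \sum_(i < a.+1) \sum_(j < b.+1) f i j * g (a - i)%N (b - j)%N.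
Definition psexp (f : ps R) (n : nat) : ps R := iter n (psmul f) (psC 1).

(* Inverse of a series f whose constant term c = f 0 0 is a unit:
   f = c (1 - h) with h := 1 - c^-1 f having zero constant term, and
   f^-1 = c^-1 \sum_k h^k; the coefficient of x^a y^b only involves k <= a+b. *)
Definition psinv (f : ps R) : ps R :=
  let c := f 0%N 0%N in
  let h := psadd (psC 1) (psopp (psscale c^-1 f)) in
  fun a b => c^-1 * \sum_(k < (a + b).+1) psexp h k a b.

Definition has_sum (F : nat -> ps R) (S : ps R) : Prop :=
  forall a b, exists N, forall n, (N <= n)%N -> \sum_(i < n) F i a b = S a b.

Definition qint (q : R) (m : nat) : R := \sum_(k < m) q ^+ k.
Definition qfact (q : R) (i : nat) : R := \prod_(1 <= m < i.+1) qint q m.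

Definition den (q : R) (j : nat) : ps R :=
  psadd (psC (q ^+ j))
    (psadd (psopp (psscale (q ^+ j * qint q j.+1) psX))
           (psscale (qint q j) (psmul psX psY))).

End PS.

(* Main.v *)
Require Import Defs.
From HB Require Import structures.
From mathcomp Require Import all_boot all_order all_algebra.
From mathcomp Require Import boolp ring zify.
Set Implicit Arguments. Unset Strict Implicit. Unset Printing Implicit Defensive.
Import Order.TTheory GRing.Theory Num.Theory.
Local Open Scope ring_scope.
Lemma tri (R : comUnitRingType) (F : nat -> nat -> R) a :
  \sum_(i < a.+1) \sum_(j < i.+1) F j i =
  \sum_(j < a.+1) \sum_(k < (a - j).+1) F j (j + k)%N.
Proof.
elim: a => [|a IH]; first by rewrite big_ord1 big_ord1 /= !big_ord1.
rewrite big_ord_recr /= IH.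
rewrite [in RHS]big_ord_recr /= subnn big_ord1 addn0.
rewrite [\sum_(j < a.+2) F j a.+1]big_ord_recr /= addrA; congr (_ + _).
rewrite -big_split /=; apply: eq_bigr => j _.
rewrite subSn; last by rewrite -ltnS.
rewrite [RHS]big_ord_recr /=; congr (_ + _); congr (F _ _).
by rewrite addnS subnKC // -ltnS.
Qed.

Lemma psmulA (R : comUnitRingType) : associative (@psmul R).
Proof.
move=> f g h; apply: boolp.funext => a; apply: boolp.funext => b.
rewrite /psmul; symmetry.
transitivity (\sum_(i < a.+1) \sum_(i1 < i.+1) \sum_(j < b.+1) \sum_(j1 < j.+1)
   f i1 j1 * g (i - i1)%N (j - j1)%N * h (a - i)%N (b - j)%N).
  apply: eq_bigr => i _.
  under eq_bigr => j _ do rewrite mulr_suml.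
  rewrite exchange_big /=; apply: eq_bigr => i1 _.
  by apply: eq_bigr => j _; rewrite mulr_suml.
rewrite (tri (fun i1 i => \sum_(j < b.+1) \sum_(j1 < j.+1)
   f i1 j1 * g (i - i1)%N (j - j1)%N * h (a - i)%N (b - j)%N)).
apply: eq_bigr => i1 _.
under [RHS]eq_bigr => j1 _ do rewrite mulr_sumr.
rewrite [RHS]exchange_big /=; apply: eq_bigr => k _.
rewrite (tri (fun j1 j => f i1 j1 * g (i1 + k - i1)%N (j - j1)%N * h (a - (i1 + k))%N (b - j)%N)).
apply: eq_bigr => j1 _.
rewrite mulr_sumr; apply: eq_bigr => l _.
by rewrite mulrA !addKn !subnDA.
Qed.

Lemma psmulC (R : comUnitRingType) : commutative (@psmul R).
Proof.
move=> f g; apply: boolp.funext => a; apply: boolp.funext => b.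
rewrite /psmul (reindex_inj rev_ord_inj) /=; apply: eq_bigr => i _.
rewrite (reindex_inj rev_ord_inj) /=; apply: eq_bigr => j _.
rewrite !subSS !subKn 1?mulrC //; rewrite -ltnS; exact: ltn_ord.
Qed.

Lemma psmul1 (R : comUnitRingType) : left_id (psC (1 : R)) (@psmul R).
Proof.
move=> f; apply: boolp.funext => a; apply: boolp.funext => b.
rewrite /psmul big_ord_recl big_ord_recl /= /psC /= mul1r !subn0.
rewrite big1 ?addr0; last by move=> j _; rewrite mul0r.
rewrite big1 ?addr0 //; move=> i _; rewrite big1 // => j _; by rewrite mul0r.
Qed.

Lemma psmulDl (R : comUnitRingType) : left_distributive (@psmul R) (@psadd R).
Proof.
move=> f g h; apply: boolp.funext => a; apply: boolp.funext => b.
rewrite /psmul /psadd -big_split; apply: eq_bigr => i _.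
rewrite -big_split; apply: eq_bigr => j _; exact: mulrDl.
Qed.

Section PSring.
Variable R : comUnitRingType.
Definition PS : Type := ps R.
HB.instance Definition _ := Choice.on PS.
Definition ps0 : PS := fun _ _ => 0.
Lemma psaddA : associative (@psadd R).
Proof. by move=> f g h; apply: boolp.funext=> a; apply: boolp.funext=> b; rewrite /psadd addrA. Qed.
Lemma psaddC : commutative (@psadd R).
Proof. by move=> f g; apply: boolp.funext=> a; apply: boolp.funext=> b; rewrite /psadd addrC. Qed.
Lemma psadd0 : left_id ps0 (@psadd R).
Proof. by move=> f; apply: boolp.funext=> a; apply: boolp.funext=> b; rewrite /psadd add0r. Qed.
Lemma psaddN : left_inverse ps0 (@psopp R) (@psadd R).
Proof. by move=> f; apply: boolp.funext=> a; apply: boolp.funext=> b; rewrite /psadd /psopp addNr. Qed.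
HB.instance Definition _ := GRing.isZmodule.Build PS psaddA psaddC psadd0 psaddN.
Lemma psone_neq0 : (psC (1 : R) : PS) != 0.
Proof.
apply/eqP => H; have := congr1 (fun f : PS => f 0%N 0%N) H.
by rewrite /psC /= => /eqP; rewrite oner_eq0.
Qed.
HB.instance Definition _ := GRing.Zmodule_isComNzRing.Build PS
  (@psmulA R) (@psmulC R) (@psmul1 R) (@psmulDl R) psone_neq0.

Lemma psmulE (f g : PS) a b : (f * g) a b =
  \sum_(i < a.+1) \sum_(j < b.+1) f i j * g (a - i)%N (b - j)%N.
Proof. by []. Qed.
Lemma psaddE (f g : PS) a b : (f + g) a b = f a b + g a b.
Proof. by []. Qed.
Lemma psoppE (f : PS) a b : (- f) a b = - f a b.
Proof. by []. Qed.
Lemma ps0E a b : (0 : PS) a b = 0.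
Proof. by []. Qed.
Lemma psbE (f g : PS) a b : (f - g) a b = f a b - g a b.
Proof. by []. Qed.
Lemma ps1E : (1 : PS) = psC 1.
Proof. by []. Qed.

Definition Cm (c : R) : PS := psC c.
Lemma CmE c a b : Cm c a b = if (a == 0%N) && (b == 0%N) then c else 0.
Proof. by []. Qed.

Lemma Cm_mulE c (f : PS) a b : (Cm c * f) a b = c * f a b.
Proof.
rewrite psmulE big_ord_recl big_ord_recl /= CmE /= !subn0.
rewrite big1 ?addr0; last by move=> j _; rewrite CmE mul0r.
rewrite big1 ?addr0 //; move=> i _; rewrite big1 // => j _; by rewrite CmE mul0r.
Qed.

Lemma Cm_zmod : zmod_morphism Cm.
Proof.
move=> x y; apply: boolp.funext => a; apply: boolp.funext => b.
by rewrite psbE !CmE; case: ifP => _; rewrite ?subr0.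
Qed.
Lemma Cm_monoid : monoid_morphism Cm.
Proof.
split => // x y; apply: boolp.funext => a; apply: boolp.funext => b.
by rewrite Cm_mulE !CmE; case: ifP => _; rewrite ?mulr0.
Qed.
HB.instance Definition _ := GRing.isZmodMorphism.Build R PS Cm Cm_zmod.
HB.instance Definition _ := GRing.isMonoidMorphism.Build R PS Cm Cm_monoid.


Lemma psscaleE c (f : PS) : (psscale c f : PS) = Cm c * f.
Proof. by apply: boolp.funext => a; apply: boolp.funext => b; rewrite Cm_mulE. Qed.

Lemma psexpE (f : PS) n : (psexp f n : PS) = f ^+ n.
Proof. by elim: n => [|n IH] //=; rewrite exprS -IH. Qed.

Lemma ps_sumE (F : nat -> PS) n a b : (\sum_(i < n) F i) a b = \sum_(i < n) F i a b.
Proof.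
elim: n => [|n IH]; first by rewrite !big_ord0.
by rewrite !big_ord_recr /= -IH.
Qed.

Definition xord n (f : PS) := forall a b, (a < n)%N -> f a b = 0.
Definition yord n (f : PS) := forall a b, (b < n)%N -> f a b = 0.
Definition tord n (f : PS) := forall a b, (a + b < n)%N -> f a b = 0.

Lemma xord_mul m n f g : xord m f -> xord n g -> xord (m + n) (f * g).
Proof.
move=> hf hg a b hab; rewrite psmulE big1 // => i _; rewrite big1 // => j _.
case: (ltnP i m) => him; first by rewrite hf // mul0r.
rewrite hg ?mulr0 //.
have hi : (i <= a)%N by rewrite -ltnS.
lia. Qed.

Lemma yord_mul m n f g : yord m f -> yord n g -> yord (m + n) (f * g).
Proof.
move=> hf hg a b hab; rewrite psmulE big1 // => i _; rewrite big1 // => j _.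
case: (ltnP j m) => hjm; first by rewrite hf // mul0r.
rewrite hg ?mulr0 //.
have hj : (j <= b)%N by rewrite -ltnS.
lia.
Qed.

Lemma tord_mul m n f g : tord m f -> tord n g -> tord (m + n) (f * g).
Proof.
move=> hf hg a b hab; rewrite psmulE big1 // => i _; rewrite big1 // => j _.
case: (ltnP (i + j) m) => him; first by rewrite hf // mul0r.
rewrite hg ?mulr0 //.
have hi : (i <= a)%N by rewrite -ltnS.
have hj : (j <= b)%N by rewrite -ltnS.
lia.
Qed.

Lemma xord0 f : xord 0 f. Proof. by []. Qed.
Lemma yord0 f : yord 0 f. Proof. by []. Qed.
Lemma xord_le m n f : (m <= n)%N -> xord n f -> xord m f.
Proof. by move=> hmn hf a b ha; apply: hf; apply: leq_trans hmn. Qed.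
Lemma yord_le m n f : (m <= n)%N -> yord n f -> yord m f.
Proof. by move=> hmn hf a b ha; apply: hf; apply: leq_trans hmn. Qed.
Lemma xord_add n f g : xord n f -> xord n g -> xord n (f + g).
Proof. by move=> hf hg a b h; rewrite psaddE hf ?hg ?addr0. Qed.
Lemma yord_add n f g : yord n f -> yord n g -> yord n (f + g).
Proof. by move=> hf hg a b h; rewrite psaddE hf ?hg ?addr0. Qed.
Lemma xord_opp n f : xord n f -> xord n (- f).
Proof. by move=> hf a b h; rewrite psoppE hf ?oppr0. Qed.
Lemma yord_opp n f : yord n f -> yord n (- f).
Proof. by move=> hf a b h; rewrite psoppE hf ?oppr0. Qed.
Lemma xord_sum n k (F : nat -> PS) : (forall i, xord n (F i)) -> xord n (\sum_(i < k) F i).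
Proof.
move=> hF; elim: k => [|k IH]; first by rewrite big_ord0.
by rewrite big_ord_recr; apply: xord_add.
Qed.
Lemma yord_sum n k (F : nat -> PS) : (forall i, yord n (F i)) -> yord n (\sum_(i < k) F i).
Proof.
move=> hF; elim: k => [|k IH]; first by rewrite big_ord0.
by rewrite big_ord_recr; apply: yord_add.
Qed.

Lemma xordX : xord 1 (psX R). Proof. by move=> [|a] b. Qed.
Lemma yordY : yord 1 (psY R). Proof. by move=> a [|b]; rewrite /psY ?andbF. Qed.
Lemma xordXn n : xord n ((psX R : PS) ^+ n).
Proof.
elim: n => [|n IH]; first exact: xord0.
by rewrite exprS -add1n; apply: xord_mul => //; exact: xordX.
Qed.
Lemma yordYn n : yord n ((psY R : PS) ^+ n).
Proof.
elim: n => [|n IH]; first exact: yord0.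
by rewrite exprS -add1n; apply: yord_mul => //; exact: yordY.
Qed.
Lemma xord_mull n f g : xord n f -> xord n (g * f).
Proof. by move=> h; rewrite -[n]add0n; apply: xord_mul. Qed.
Lemma yord_mull n f g : yord n f -> yord n (g * f).
Proof. by move=> h; rewrite -[n]add0n; apply: yord_mul. Qed.
Lemma xord_mulr n f g : xord n f -> xord n (f * g).
Proof. by move=> h; rewrite mulrC; apply: xord_mull. Qed.
Lemma yord_mulr n f g : yord n f -> yord n (f * g).
Proof. by move=> h; rewrite mulrC; apply: yord_mull. Qed.
Lemma sum_widen (F : nat -> R) N d : (forall k, (N <= k)%N -> F k = 0) ->
  \sum_(k < N + d) F k = \sum_(k < N) F k.
Proof.
move=> hF; elim: d => [|d IH]; first by rewrite addn0.
by rewrite addnS big_ord_recr /= IH hF ?addr0 // leq_addr.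
Qed.

Lemma mul_congr (g1 g2 f : PS) a b :
  (forall i j, (i <= a)%N -> (j <= b)%N -> g1 i j = g2 i j) -> (g1 * f) a b = (g2 * f) a b.
Proof.
move=> h; rewrite !psmulE; apply: eq_bigr => i _; apply: eq_bigr => j _.
by rewrite h // -ltnS.
Qed.

Lemma psinvK (f : PS) : f 0%N 0%N \is a GRing.unit -> (psinv f : PS) * f = 1.
Proof.
move=> hu; set c := f 0%N 0%N.
set h : PS := 1 - Cm c^-1 * f.
have hh : psadd (psC 1) (psopp (psscale c^-1 f)) = h by rewrite psscaleE.
have h1 : tord 1 h.
  move=> [|a] [|b] // _; rewrite /h psbE Cm_mulE mulVr //; exact: subrr.
have hk : forall k, tord k (h ^+ k).
  elim=> [|k IH]; first by [].
  by rewrite exprS -add1n; apply: tord_mul.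
apply: boolp.funext => a; apply: boolp.funext => b.
set N := (a + b).+1.
set S : PS := \sum_(k < N) h ^+ k.
have e1 : ((psinv f : PS) * f) a b = (Cm c^-1 * S * f) a b.
  apply: mul_congr => i j hi hj.
  rewrite Cm_mulE /S ps_sumE /psinv -/c hh; congr (_ * _).
  have -> : N = ((i + j).+1 + (N - (i + j).+1))%N.
    rewrite subnKC // /N ltnS; exact: leq_add.
  rewrite (sum_widen (F := fun k => (h ^+ k) i j)); last by move=> k hk'; apply: hk.
  by apply: eq_bigr => k _; rewrite psexpE.
rewrite e1 -mulrA [S * _]mulrC mulrA.
have -> : Cm c^-1 * f = 1 - h by rewrite /h opprB addrC subrK.
have -> : (1 - h) * S = 1 - h ^+ N by rewrite -opprB mulNr /S -subrX1 opprB.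
by rewrite psbE (hk N) ?subr0 // /N.
Qed.

Lemma psinvE (f g : PS) : f 0%N 0%N \is a GRing.unit -> g * f = 1 -> (psinv f : PS) = g.
Proof.
move=> hu hg; rewrite -(mulr1 (psinv f : PS)) -hg mulrCA psinvK //; exact: mulr1.
Qed.

End PSring.

Lemma abel (S : comRingType) (a Qf : nat -> S) (l : S) n :
  \sum_(m < n.+1) (a m - l * a m.+1) * Qf m =
  a 0%N * Qf 0%N + \sum_(m < n) a m.+1 * (Qf m.+1 - l * Qf m) - l * a n.+1 * Qf n.
Proof.
elim: n => [|n IH]; first by rewrite big_ord1 big_ord0; ring.
rewrite big_ord_recr /= IH [\sum_(m < n.+1) _]big_ord_recr /=; ring.
Qed.

Section Main.
Variable R : comUnitRingType.
Variable q : R.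
Hypothesis hq : q \is a GRing.unit.
Local Notation PS := (PS R).
Local Notation C := (@Cm R).
Definition XX : PS := psX R.
Definition YY : PS := psY R.
Local Notation p := (q^-1).

Lemma qintD a b : qint q (a + b) = qint q a + q ^+ a * qint q b.
Proof.
rewrite /qint big_split_ord /= mulr_sumr; congr (_ + _).
by apply: eq_bigr => i _; rewrite exprD.
Qed.

Definition DD j : PS := den q j.
Lemma denE j : DD j = C (q ^+ j) - C (q ^+ j * qint q j.+1) * XX + C (qint q j) * (XX * YY).
Proof. by rewrite /DD /den !psscaleE -[RHS]addrA. Qed.

Lemma den00 j : DD j 0%N 0%N = q ^+ j.
Proof.
rewrite denE !psaddE psoppE !Cm_mulE CmE /= /XX /psX /=.
by rewrite psmulE !big_ord1 /= /psX /= mul0r !mulr0 subr0 addr0.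
Qed.

Definition II j : PS := psinv (DD j).
Lemma IID j : II j * DD j = 1.
Proof. by apply: psinvK; rewrite den00 unitrX. Qed.

Definition Q m k : PS := \prod_(j < k.+1) II (m + j)%N.
Lemma Qrecl m k : Q m k.+1 = II m * Q m.+1 k.
Proof.
rewrite /Q big_ord_recl /= addn0; congr (_ * _); apply: eq_bigr => j _.
by rewrite /bump /= add1n addnS addSn.
Qed.
Lemma Qrecr m k : Q m k.+1 = Q m k * II (m + k.+1)%N.
Proof. by rewrite /Q big_ord_recr. Qed.
Lemma Q1 m k : Q m.+1 k = DD m * Q m k.+1.
Proof. by rewrite Qrecl mulrA [DD m * _]mulrC IID mul1r. Qed.
Lemma Q2 m k : Q m k = DD (m + k.+1)%N * Q m k.+1.
Proof. by rewrite Qrecr mulrCA [DD _ * _]mulrC IID mulr1. Qed.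

Lemma qpn n : q ^+ n * p ^+ n = 1.
Proof. by rewrite -exprMn mulrV // expr1n. Qed.
Lemma qpE n a b : q ^+ (n + a) * p ^+ (n + b) = q ^+ a * p ^+ b.
Proof. by rewrite !exprD mulrACA qpn mul1r. Qed.

Lemma Dkey m k : C (q ^+ k.+1) * DD m - DD (m + k.+1)%N =
  XX * C (qint q k.+1) * (C (q ^+ m * q ^+ k.+1 * q ^+ m.+1) - YY).
Proof.
rewrite !denE.
have e1 : qint q (m + k.+1).+1 = qint q m.+1 + q ^+ m.+1 * qint q k.+1.
  by rewrite -qintD addSn.
have e2 : qint q (m + k.+1) = qint q k.+1 + q ^+ k.+1 * qint q m.
  by rewrite -qintD addnC.
rewrite e1 e2 exprD.
rewrite !rmorphD !rmorphM /=.
ring.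
Qed.

Lemma Qstep m k : Q m.+1 k - C (p ^+ k.+1) * Q m k =
  XX * C (qint q k.+1 * p ^+ k.+1) * (C (q ^+ m * q ^+ k.+1 * q ^+ m.+1) - YY) * Q m k.+1.
Proof.
rewrite Q1 (Q2 m k).
set A := Q m k.+1.
have -> : DD m * A - C (p ^+ k.+1) * (DD (m + k.+1) * A) =
   C (p ^+ k.+1) * (C (q ^+ k.+1) * DD m - DD (m + k.+1)) * A.
  rewrite -[DD m * A]mul1r -(rmorph1 C) -(qpn k.+1) rmorphM /=; ring.
rewrite Dkey rmorphM /=; ring.
Qed.

Definition em m := (m * m.-1)%N.
Lemma emS m : em m.+1 = (em m + m + m)%N.
Proof. by case: m => [|m] //; rewrite /em /=; nia. Qed.
Definition aa m : PS := C (p ^+ em m) * YY ^+ m.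
Definition cc k : PS := C (q ^+ k * qfact q k) * XX ^+ k.
Definition term k m : PS := cc k * YY ^+ k * (aa m - C (p ^+ k.+1) * aa m.+1) * Q m k.
Definition VV k n : PS := \sum_(m < n) term k m.
Definition PP k : PS := cc k * YY ^+ k * aa 0 * Q 0 k.
Definition BB k n : PS := cc k * YY ^+ k * C (p ^+ k.+1) * aa n.+1 * Q n k.

Lemma qfactS k : qfact q k.+1 = qfact q k * qint q k.+1.
Proof. by rewrite /qfact big_nat_recr. Qed.

Lemma scal1 k m : q ^+ k * p ^+ em m.+1 * p ^+ k.+1 * (q ^+ m * q ^+ k.+1 * q ^+ m.+1)
   = q ^+ k.+1 * p ^+ em m.
Proof.
have -> : q ^+ k * p ^+ em m.+1 * p ^+ k.+1 * (q ^+ m * q ^+ k.+1 * q ^+ m.+1) =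
   q ^+ (k + (m + k.+1 + m.+1)) * p ^+ (em m.+1 + k.+1) by rewrite !exprD; ring.
have -> : (k + (m + k.+1 + m.+1) = (m + m + k.+1) + k.+1)%N by lia.
by rewrite emS (_ : (em m + m + m + k.+1 = (m + m + k.+1) + em m)%N) ?qpE //; lia.
Qed.

Lemma scal2 k m : q ^+ k * p ^+ em m.+1 * p ^+ k.+1 =
   q ^+ k.+1 * p ^+ k.+2 * p ^+ em m.+1.
Proof.
rewrite -mulrA -exprD -[RHS]mulrA -exprD.
by rewrite (_ : k.+1 = 1 + k)%N // (_ : (k.+2 + em m.+1 = 1 + (k.+1 + em m.+1))%N) // qpE addnC.
Qed.

Lemma term_step k m :
  cc k * YY ^+ k * (aa m.+1 * (Q m.+1 k - C (p ^+ k.+1) * Q m k)) = term k.+1 m.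
Proof.
rewrite Qstep /term /cc /aa qfactS.
set A := Q m k.+1.
rewrite [XX ^+ k.+1]exprS [YY ^+ k.+1]exprS [YY ^+ m.+1]exprS.
set K := C (qfact q k * qint q k.+1) * XX ^+ k * XX * YY ^+ k * YY ^+ m * YY * A.
transitivity (K * C (q ^+ k * p ^+ em m.+1 * p ^+ k.+1 * (q ^+ m * q ^+ k.+1 * q ^+ m.+1))
   - K * YY * C (q ^+ k * p ^+ em m.+1 * p ^+ k.+1)).
  rewrite /K !rmorphM /=; ring.
rewrite scal1 scal2.
rewrite /K !rmorphM /=; ring.
Qed.

Lemma Vstep k n : VV k n.+1 = PP k + VV k.+1 n - BB k n.
Proof.
rewrite /VV.
under eq_bigr => m _ do rewrite /term -mulrA.
rewrite -mulr_sumr (abel (fun m => aa m) (fun m => Q m k)).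
rewrite mulrBr mulrDr mulr_sumr.
under eq_bigr => m _ do rewrite term_step.
by rewrite /PP /BB !mulrA.
Qed.

Lemma yord_BB k n : yord (n.+1 + k) (BB k n).
Proof.
rewrite /BB /aa; apply: yord_mulr.
rewrite mulrA addnC; apply: yord_mul; last exact: yordYn.
by apply: yord_mulr; apply: yord_mulr; apply: yord_mull; apply: yordYn.
Qed.

Lemma yord0_ps n : yord n (0 : PS).
Proof. by []. Qed.

Lemma chain K n : yord (n + K) (VV 0 (n + K) - \sum_(k < K) PP k - VV K n).
Proof.
elim: K n => [|K IH] n.
  by rewrite big_ord0 addn0 subr0 subrr.
have := IH n.+1; rewrite addSnnS Vstep big_ord_recr /=.
set E := VV 0 (n + K.+1).
move=> h.
have -> : E - (\sum_(i < K) PP i + PP K) - VV K.+1 n =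
  (E - \sum_(k < K) PP k - (PP K + VV K.+1 n - BB K n)) - BB K n by ring.
apply: yord_add => //; apply: yord_opp.
by rewrite -addSnnS; apply: yord_BB.
Qed.

Lemma xord_cc k : xord k (cc k).
Proof. by apply: xord_mull; apply: xordXn. Qed.

Lemma xord_VV K n : xord K (VV K n).
Proof.
apply: xord_sum => m; rewrite /term.
by apply: xord_mulr; apply: xord_mulr; apply: xord_mulr; apply: xord_cc.
Qed.

Lemma xord_PP k : xord k (PP k).
Proof. by apply: xord_mulr; apply: xord_mulr; apply: xord_mulr; apply: xord_cc. Qed.

Lemma yord_term0 i : yord i (term 0 i).
Proof.
rewrite /term; apply: yord_mulr; apply: yord_mull.
rewrite /aa; apply: yord_add; first by apply: yord_mull; apply: yordYn.
apply: yord_opp; apply: yord_mull; apply: yord_mull.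
by apply: (yord_le (leqnSn i)); apply: yordYn.
Qed.

Lemma cc0 : cc 0 = 1.
Proof. by rewrite /cc /qfact big_geq // expr0 mul1r rmorph1 mul1r. Qed.
Lemma aa0 : aa 0 = 1.
Proof. by rewrite /aa /em /= expr0 rmorph1 mul1r. Qed.
Lemma Q0 i : Q i 0 = II i.
Proof. by rewrite /Q big_ord1 addn0. Qed.

Lemma PP0 : PP 0 = II 0.
Proof. by rewrite /PP cc0 aa0 Q0 expr0 !mul1r. Qed.

Lemma term00 : term 0 0 = II 0 - C p * YY * II 0.
Proof.
rewrite /term cc0 Q0 aa0 /aa /em /= !expr0 expr1 rmorph1 !mul1r; ring.
Qed.

End Main.

Lemma F_eq (R : comUnitRingType) (q : R) (i : nat) :
  psmul (psC (q ^+ i * qfact q i))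
        (psmul (psexp (psX R) i)
          (psmul (psexp (psY R) i)
            (\big[@psmul R/psC 1]_(j < i.+1) psinv (den q j)))) = PP q i.
Proof.
have eQ : \big[@psmul R/psC 1]_(j < i.+1) psinv (den q j) = Q q 0 i.
  by rewrite /Q; apply: eq_bigr => j _; rewrite add0n.
rewrite eQ /PP /cc aa0 mulr1 -!mulrA.
by rewrite -!psexpE.
Qed.

Lemma G_eq (R : comUnitRingType) (q : R) (hq : q \is a GRing.unit) (i : nat) :
  (psmul
    (psmul (psC (q ^- (i * i + i + 1)))
      (psmul (psexp (psY R) i) (psadd (psC (q ^+ (2 * i + 1))) (psopp (psY R)))))
    (psinv (den q i)) : PS R) = term q 0 i.
Proof.
rewrite psexpE -exprVn.
set N := (i * i + i + 1)%N.
have s1 : q^-1 ^+ N * q ^+ (2 * i + 1) = q^-1 ^+ em i.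
  have := qpE hq (2 * i + 1) 0 (em i); rewrite addn0 expr0 mul1r => <-.
  rewrite mulrC; congr (_ * (_ ^+ _)).
  rewrite /N /em; clear; case: i => [|i] //=; nia.
have s2 : q^-1 ^+ 1 * q^-1 ^+ em i.+1 = q^-1 ^+ N.
  by rewrite -exprD /N /em /=; congr (_ ^+ _); nia.
have -> : (psmul (psmul (psC (q^-1 ^+ N))
      (psmul ((psY R : PS R) ^+ i) (psadd (psC (q ^+ (2 * i + 1))) (psopp (psY R)))))
    (psinv (den q i)) : PS R) =
    Cm (q^-1 ^+ N) * (YY R ^+ i * (Cm (q ^+ (2 * i + 1)) - YY R)) * II q i by [].
rewrite /term cc0 Q0 /aa [YY R ^+ 0]expr0 [YY R ^+ i.+1]exprS !mul1r -s1 -s2.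
rewrite !rmorphM /=; ring.
Qed.

Lemma H_eq (R : comUnitRingType) (q : R) (hq : q \is a GRing.unit) :
  (psinv (psscale q (psadd (psC 1) (psopp (psX R)))) : PS R) = Cm q^-1 * II q 0.
Proof.
have e1 : (psadd (psC 1) (psopp (psX R)) : PS R) = DD q 0.
  rewrite denE expr0 mul1r /qint big_ord1 big_ord0 expr0 rmorph1 rmorph0 mul0r addr0 mul1r.
  by [].
apply: psinvE.
  by rewrite /psscale /psadd /psopp /psC /psX /= oppr0 addr0 mulr1.
rewrite psscaleE e1 mulrACA -rmorphM /= mulVr // rmorph1 mul1r IID //.
Qed.

Unset Implicit Arguments.

Theorem mainTheorem6 (R : comUnitRingType) (q : R) (hq : q \is a GRing.unit) :
  exists L T : ps R,
    has_sum (fun k => let i := k.+1 in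
      psmul (psC (q ^+ i * qfact q i))
        (psmul (psexp (psX R) i)
          (psmul (psexp (psY R) i)
            (\big[@psmul R/psC 1]_(j < i.+1) psinv (den q j))))) L /\
    has_sum (fun k => let i := k.+1 in
      psmul
        (psmul (psC (q ^- (i * i + i + 1)))
          (psmul (psexp (psY R) i) (psadd (psC (q ^+ (2 * i + 1))) (psopp (psY R)))))
        (psinv (den q i))) T /\
    forall a b : nat,
      L a b = psadd (psopp (psmul (psY R) (psinv (psscale q (psadd (psC 1) (psopp (psX R)))))))
                    T a b.
Proof.
exists (fun a b => \sum_(k < a) (PP q k.+1 : PS R) a b).
exists (fun a b => \sum_(k < b) (term q 0 k.+1 : PS R) a b).
split; [|split].
- move=> a b; exists a => n hn /=.
  under eq_bigr => k _ do rewrite F_eq.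
  rewrite -(subnKC hn) (sum_widen (F := fun k => (PP q k.+1 : PS R) a b)) // => k hk.
  by apply: xord_PP; rewrite ltnS.
- move=> a b; exists b => n hn /=.
  under eq_bigr => k _ do rewrite (G_eq hq).
  rewrite -(subnKC hn) (sum_widen (F := fun k => (term q 0 k.+1 : PS R) a b)) // => k hk.
  by apply: yord_term0; rewrite ltnS.
move=> a b.
have hc := chain hq (K := a.+1) (n := b.+1).
have {hc} hc := hc a b (leq_trans (ltnSn b) (leq_addr _ _)).
rewrite !psbE in hc.
have h0 : (VV q a.+1 b.+1 : PS R) a b = 0 by apply: xord_VV.
rewrite h0 subr0 in hc; move/eqP: hc; rewrite subr_eq0 => /eqP hc.
rewrite ps_sumE big_ord_recl /= PP0 in hc.
have eb : forall i, bump 0 i = i.+1 by move=> i; rewrite /bump add1n.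
rewrite (eq_bigr (fun i : 'I_a => (PP q i.+1 : PS R) a b)) in hc; last by move=> i _; rewrite eb.
rewrite /VV ps_sumE addSn big_ord_recl /= term00 in hc.
rewrite (sum_widen (F := fun k => (term q 0 k.+1 : PS R) a b)) in hc; last first.
  by move=> k hk; apply: yord_term0; rewrite ltnS.
rewrite /psadd /psopp (H_eq hq).
have e : (YY R * (Cm q^-1 * II q 0)) = Cm q^-1 * YY R * II q 0 by ring.
rewrite (_ : psmul (psY R) (Cm q^-1 * II q 0) a b = (Cm q^-1 * YY R * II q 0 : PS R) a b);
  last by rewrite -e.
apply: (addrI (II q 0 a b)); rewrite -hc psbE; ring.
Qed.
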